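(* Let $V$ be the value function defined in the context (the limit of relative value iteration). For any $\mathbf Q^1,\mathbf Q^2\in\mathcal Q$ with $\mathbf Q^2\succeq\mathbf Q^1$ (componentwise $\ge$), we have $V(\mathbf Q^2)\ge V(\mathbf Q^1)$.
   Context: Model. Let $N\ge 1$, $\mathcal N=\{0,1,\dots,N\}$ (base station $0$ is the macro base station, MBS) and $\mathcal N^+=\{1,\dots,N\}$ (small base stations, SBSs). Let $\mathcal M=\{1,\dots,M\}$ be the set of contents. For each $n\in\mathcal N$ let $\mathcal M_n\subseteq\mathcal M$ be the set of contents cached at BS $n$, with $\mathcal M_0=\mathcal M$; put $\tilde{\mathcal M}_n=\mathcal M_n\cup\{0\}$ and $\mathcal N_m=\{n\in\mathcal N^+: m\in\mathcal M_n\}$. Powers $p(n,m)\ge 0$ are given for $n\in\mathcal N$, $m\in\mathcal M_n$, and $p(n,0)=0$. A weight $w\ge 0$ is fixed. The feasible action space is $\mathcal U=\{\mathbf u=(u_n)_{n\in\mathcal N}: u_n\in\tilde{\mathcal M}_n\ \forall n,\ u_0\sum_{n\in\mathcal N^+}u_n=0\}$. A state is $\mathbf Q=(Q_{n,m})_{n\in\mathcal N,m\in\mathcal M_n}$ with $Q_{n,m}\in\mathcal Q_{n,m}=\{0,1,\dots,N_{n,m}\}$ for given positive integers $N_{n,m}$; $\mathcal Q=\prod_{n\in\mathcal N}\prod_{m\in\mathcal M_n}\mathcal Q_{n,m}$. Arrivals $A_{n,m}$ ($n\in\mathcal N$, $m\in\mathcal M$) are mutually independent nonnegative-integer random variables with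 fixed distributions, i.i.d. across time slots; $\tilde A_{0,m}=A_{0,m}+\sum_{n\in\mathcal N^+\setminus\mathcal N_m}A_{n,m}$. Given state $\mathbf Q$ and action $\mathbf u$, the next state $\mathbf Q'$ is $Q'_{0,m}=\min\{\mathbf 1(u_0\neq m)Q_{0,m}+\tilde A_{0,m},N_{0,m}\}$ for $m\in\mathcal M_0$ and $Q'_{n,m}=\min\{\mathbf 1(u_0\neq m\text{ and }u_n\neq m)Q_{n,m}+A_{n,m},N_{n,m}\}$ for $n\in\mathcal N^+$, $m\in\mathcal M_n$; $\mathbb E$ denotes expectation over the arrivals. The per-stage cost is $g(\mathbf Q,\mathbf u)=d(\mathbf Q)+w\,p(\mathbf u)$ with $d(\mathbf Q)=\sum_{n\in\mathcal N}\sum_{m\in\mathcal M_n}Q_{n,m}$ and $p(\mathbf u)=\sum_{n\in\mathcal N}p(n,u_n)$. Value function. Fix a reference state $\mathbf Q^\dagger\in\mathcal Q$. Relative value iteration: $V_0\equiv 0$, $J_{l+1}(\mathbf Q,\mathbf u)=g(\mathbf Q,\mathbf u)+\mathbb E[V_l(\mathbf Q')]$, and $V_{l+1}(\mathbf Q)=\min_{\mathbf u\in\mathcal U}J_{l+1}(\mathbf Q,\mathbf u)-\min_{\mathbf u\in\mathcal U}J_{l+1}(\mathbf Q^\dagger,\mathbf u)$ for $l\ge0$. It is assumed (standing assumption of the paper, guaranteed under its unichain conditions) that $V_l$ converges pointwise to a function $V:\mathcal Q\to\mathbb R$; this $V$ is the value function, which solves the Bellman equation $\theta+V(\mathbf Q)=\min_{\mathbf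 u\in\mathcal U}\{g(\mathbf Q,\mathbf u)+\mathbb E[V(\mathbf Q')]\}$ for all $\mathbf Q$. *)

(* Defs.v *)
From Stdlib Require Import Reals List Arith Classical ClassicalEpsilon.
Import ListNotations.
Open Scope bool_scope.
Open Scope R_scope.

(* Parameters of the cache-enabled network model.
   Indices: BS n in {0..NB} (0 = MBS), contents m in {1..MC}. *)
Record Model := {
  NB : nat;
  MC : nat;
  cached : nat -> nat -> bool;     (* cached n m  <->  m in M_n  (n >= 1) *)
  pw : nat -> nat -> R;
  wt : R;
  cap : nat -> nat -> nat;
  pmf : nat -> nat -> nat -> R     (* pmf n m k = P(A_{n,m} = k) *)
}.

(* m in M_n ; M_0 = M by definition *)
Definition inM (md : Model) (n m : nat) : bool :=
  Nat.leb 1 m && Nat.leb m (MC md) && (Nat.eqb n 0 || cached md n m).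

Definition inDom (md : Model) (n m : nat) : Prop :=
  (n <= NB md)%nat /\ inM md n m = true.

Definition state := nat -> nat -> nat.

(* Q in the state space: 0 <= Q_{n,m} <= N_{n,m} on the domain, and
   (canonical representation) 0 off the domain. *)
Definition inQ (md : Model) (Q : state) : Prop :=
  forall n m, (inDom md n m -> (Q n m <= cap md n m)%nat) /\
              (~ inDom md n m -> Q n m = 0%nat).

Definition model_wf (md : Model) : Prop :=
  (1 <= NB md)%nat /\
  0 <= wt md /\
  (forall n, (n <= NB md)%nat -> pw md n 0 = 0) /\
  (forall n m, inDom md n m -> 0 <= pw md n m) /\
  (forall n m, inDom md n m -> (1 <= cap md n m)%nat) /\
  (forall n m k, 0 <= pmf md n m k) /\
  (forall n m, (n <= NB md)%nat -> (1 <= m <= MC md)%nat ->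
      infinite_sum (pmf md n m) 1).

(* an action is the list [u_0; ...; u_N]; u_n = nth n u 0 *)
Definition act (u : list nat) (n : nat) : nat := nth n u 0%nat.

Definition candidates (md : Model) (n : nat) : list nat :=
  0%nat :: filter (fun m => inM md n m) (seq 1 (MC md)).

Fixpoint vecs (cs : list (list nat)) : list (list nat) :=
  match cs with
  | [] => [[]]
  | c :: cs' => flat_map (fun x => map (cons x) (vecs cs')) c
  end.

Definition feasible (md : Model) (u : list nat) : bool :=
  Nat.eqb (act u 0 * list_sum (map (act u) (seq 1 (NB md)))) 0.

Definition actions (md : Model) : list (list nat) :=
  filter (feasible md) (vecs (map (candidates md) (seq 0 (S (NB md))))).

Definition zero_action (md : Model) : list nat := repeat 0%nat (S (NB md)).

(* min over U of f (the zero action belongs to U) *)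
Definition minU (md : Model) (f : list nat -> R) : R :=
  fold_right (fun u acc => Rmin (f u) acc) (f (zero_action md)) (actions md).

Definition sumR (l : list nat) (f : nat -> R) : R :=
  fold_right (fun i acc => f i + acc) 0 l.

Definition dcost (md : Model) (Q : state) : R :=
  sumR (seq 0 (S (NB md))) (fun n =>
    sumR (seq 1 (MC md)) (fun m =>
      if inM md n m then INR (Q n m) else 0)).

Definition pcost (md : Model) (u : list nat) : R :=
  sumR (seq 0 (S (NB md))) (fun n => pw md n (act u n)).

Definition gcost (md : Model) (Q : state) (u : list nat) : R :=
  dcost md Q + wt md * pcost md u.

(* a n m = realized arrival A_{n,m} *)
Definition next_state (md : Model) (Q : state) (u : list nat)
    (a : nat -> nat -> nat) : state :=
  fun n m =>
    if Nat.leb n (NB md) && inM md n m then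
      if Nat.eqb n 0 then
        Nat.min ((if Nat.eqb (act u 0) m then 0 else Q 0%nat m) + a 0%nat m
                 + list_sum (map (fun k => if cached md k m then 0%nat else a k m)
                                 (seq 1 (NB md))))
                (cap md 0 m)
      else
        Nat.min ((if Nat.eqb (act u 0) m || Nat.eqb (act u n) m then 0 else Q n m)
                 + a n m)
                (cap md n m)
    else 0%nat.

(* value of a convergent series (0 if it does not converge) *)
Definition series_val (s : nat -> R) : R :=
  match excluded_middle_informative (exists l, infinite_sum s l) with
  | left H => proj1_sig (constructive_indefinite_description _ H)
  | right _ => 0
  end.

Definition upd (a : nat -> nat -> nat) (n m k : nat) : nat -> nat -> nat :=
  fun n' m' => if Nat.eqb n' n && Nat.eqb m' m then k else a n' m'.

(* iterated expectation: E[F(A)] = sum_{k1} P(A_{i1}=k1) sum_{k2} ... F *)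
Fixpoint Eidx (md : Model) (idx : list (nat * nat))
    (F : (nat -> nat -> nat) -> R) : R :=
  match idx with
  | [] => F (fun _ _ => 0%nat)
  | (n, m) :: rest =>
      series_val (fun k =>
        pmf md n m k * Eidx md rest (fun a => F (upd a n m k)))
  end.

Definition arr_idx (md : Model) : list (nat * nat) :=
  flat_map (fun n => map (fun m => (n, m)) (seq 1 (MC md))) (seq 0 (S (NB md))).

Definition Exp (md : Model) (F : (nat -> nat -> nat) -> R) : R :=
  Eidx md (arr_idx md) F.

Definition Jfun (md : Model) (Vprev : state -> R) (Q : state) (u : list nat) : R :=
  gcost md Q u + Exp md (fun a => Vprev (next_state md Q u a)).

Fixpoint RVI (md : Model) (Qref : state) (l : nat) : state -> R :=
  match l with
  | O => fun _ => 0
  | S l' => fun Q =>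
      minU md (Jfun md (RVI md Qref l') Q) - minU md (Jfun md (RVI md Qref l') Qref)
  end.

Definition state_ge (md : Model) (Q2 Q1 : state) : Prop :=
  forall n m, inDom md n m -> (Q1 n m <= Q2 n m)%nat.

(* Main.v *)
Require Import Defs.
From Stdlib Require Import Reals.
From Stdlib Require Import List Arith Lia Lra Classical ClassicalEpsilon.
From Coquelicot Require Import Coquelicot.
Import ListNotations.
Open Scope R_scope.

Lemma series_val_eq s l : infinite_sum s l -> series_val s = l.
Proof.
  intro H. unfold series_val.
  destruct excluded_middle_informative as [e|n].
  - destruct (constructive_indefinite_description _ e) as [x Hx]; simpl.
    exact (uniqueness_sum _ _ _ Hx H).
  - exfalso; apply n; exists l; exact H.
Qed.

Lemma ex_bd (p e : nat -> R) B : (forall k, 0 <= p k) -> infinite_sum p 1 ->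
  (forall k, Rabs (e k) <= B) -> ex_series (fun k => p k * e k)
  /\ ex_series (fun k => Rabs (p k * e k)) /\ ex_series (fun k => B * p k)
  /\ Series (fun k => B * p k) = B.
Proof.
  intros Hp Hs He.
  assert (Hps : is_series p 1) by (apply is_series_Reals; exact Hs).
  assert (Hb : ex_series (fun k => B * p k)).
  { apply (ex_series_scal_l B p). exists 1; exact Hps. }
  assert (Hle : forall k, Rabs (p k * e k) <= B * p k).
  { intro k. rewrite Rabs_mult, (Rabs_right (p k)) by (apply Rle_ge, Hp).
    rewrite Rmult_comm. apply Rmult_le_compat_r; auto. }
  repeat split.
  - apply (@ex_series_le R_AbsRing R_CompleteNormedModule _ (fun k => B * p k)); auto.
  - apply (@ex_series_le R_AbsRing R_CompleteNormedModule _ (fun k => B * p k)); auto.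
    intro k. change (norm (Rabs (p k * e k))) with (Rabs (Rabs (p k * e k))).
    rewrite Rabs_Rabsolu; auto.
  - exact Hb.
  - rewrite Series_scal_l. rewrite (is_series_unique _ _ Hps). ring.
Qed.

Lemma sv_series (s : nat -> R) : ex_series s -> series_val s = Series s.
Proof.
  intro H. apply series_val_eq. apply is_series_Reals. apply Series_correct; auto.
Qed.

Lemma series_bound (p e : nat -> R) B : (forall k, 0 <= p k) -> infinite_sum p 1 ->
  (forall k, Rabs (e k) <= B) -> Rabs (series_val (fun k => p k * e k)) <= B.
Proof.
  intros Hp Hs He.
  destruct (ex_bd p e B Hp Hs He) as [H1 [H2 [H3 H4]]].
  rewrite sv_series by auto.
  eapply Rle_trans; [apply Series_Rabs; auto|].
  rewrite <- H4. apply Series_le; auto.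
  intro k. split; [apply Rabs_pos|].
  rewrite Rabs_mult, (Rabs_right (p k)) by (apply Rle_ge, Hp).
  rewrite Rmult_comm. apply Rmult_le_compat_r; auto.
Qed.

Lemma series_mono (p e1 e2 : nat -> R) B : (forall k, 0 <= p k) -> infinite_sum p 1 ->
  (forall k, Rabs (e1 k) <= B) -> (forall k, Rabs (e2 k) <= B) ->
  (forall k, e1 k <= e2 k) ->
  series_val (fun k => p k * e1 k) <= series_val (fun k => p k * e2 k).
Proof.
  intros Hp Hs He1 He2 Hle.
  destruct (ex_bd p e1 B Hp Hs He1) as [A1 _].
  destruct (ex_bd p e2 B Hp Hs He2) as [A2 _].
  rewrite !sv_series by auto.
  assert (Ad : ex_series (fun k => p k * e2 k - p k * e1 k)).
  { exact (ex_series_minus _ _ A2 A1). }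
  assert (H : Series (fun k => 0 * p k) <= Series (fun k => p k * e2 k - p k * e1 k)).
  { apply Series_le; auto. intro k. specialize (Hle k). specialize (Hp k).
    split; [lra|]. nra. }
  rewrite Series_scal_l in H. rewrite Series_minus in H by auto. lra.
Qed.

Definition Good (md : Model) (idx : list (nat * nat)) : Prop :=
  forall n m, In (n, m) idx -> (n <= NB md)%nat /\ (1 <= m <= MC md)%nat.

Lemma Eidx_bound md (Hwf : model_wf md) idx : Good md idx ->
  forall F B, (forall a, Rabs (F a) <= B) -> Rabs (Eidx md idx F) <= B.
Proof.
  destruct Hwf as [_ [_ [_ [_ [_ [Hp Hs]]]]]].
  induction idx as [|[n m] rest IH]; intros HG F B HF; simpl; auto.
  apply series_bound.
  - intro; apply Hp.
  - destruct (HG n m (or_introl eq_refl)); apply Hs; auto.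
  - intro k. apply IH; auto. intros n' m' Hi; apply HG; right; auto.
Qed.

Lemma Eidx_mono md (Hwf : model_wf md) idx : Good md idx ->
  forall F G B, (forall a, Rabs (F a) <= B) -> (forall a, Rabs (G a) <= B) ->
  (forall a, F a <= G a) -> Eidx md idx F <= Eidx md idx G.
Proof.
  pose proof Hwf as Hwf'.
  destruct Hwf as [_ [_ [_ [_ [_ [Hp Hs]]]]]].
  induction idx as [|[n m] rest IH]; intros HG F G B HF HGb Hle; simpl; auto.
  assert (HG' : Good md rest) by (intros n' m' Hi; apply HG; right; auto).
  apply (series_mono _ _ _ B).
  - intro; apply Hp.
  - destruct (HG n m (or_introl eq_refl)); apply Hs; auto.
  - intro k. apply Eidx_bound; auto.
  - intro k. apply Eidx_bound; auto.
  - intro k. apply (IH HG' _ _ B); auto.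
Qed.

Lemma Good_arr md : Good md (arr_idx md).
Proof.
  intros n m H. unfold arr_idx in H. apply in_flat_map in H as [n' [Hn Hm]].
  apply in_map_iff in Hm as [m' [E Hm]]. inversion E; subst.
  apply in_seq in Hn. apply in_seq in Hm. lia.
Qed.

Lemma next_inQ md Q u a : inQ md (next_state md Q u a).
Proof.
  intros n m. split.
  - intros [Hn Hm]. unfold next_state.
    replace (Nat.leb n (NB md) && inM md n m)%bool with true.
    2:{ rewrite Hm. apply Nat.leb_le in Hn. rewrite Hn. reflexivity. }
    destruct (Nat.eqb n 0) eqn:En; [apply Nat.eqb_eq in En; subst|]; lia.
  - intros Hd. unfold next_state.
    destruct (Nat.leb n (NB md) && inM md n m)%bool eqn:E; auto.
    exfalso; apply Hd. apply andb_prop in E as [E1 E2].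
    apply Nat.leb_le in E1. split; auto.
Qed.

Lemma next_mono md Q1 Q2 u a : state_ge md Q2 Q1 ->
  state_ge md (next_state md Q2 u a) (next_state md Q1 u a).
Proof.
  intros H n m _. unfold next_state.
  destruct (Nat.leb n (NB md) && inM md n m)%bool eqn:E; auto.
  apply andb_prop in E as [E1 E2]. apply Nat.leb_le in E1.
  destruct (Nat.eqb n 0) eqn:En.
  - apply Nat.eqb_eq in En; subst.
    assert (Q1 0%nat m <= Q2 0%nat m)%nat by (apply H; split; auto).
    destruct (Nat.eqb (act u 0) m); lia.
  - assert (Q1 n m <= Q2 n m)%nat by (apply H; split; auto).
    destruct (Nat.eqb (act u 0) m || Nat.eqb (act u n) m)%bool; lia.
Qed.

Lemma sumR_mono l f g : (forall i, In i l -> f i <= g i) -> sumR l f <= sumR l g.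
Proof.
  induction l; simpl; intros H; [lra|].
  apply Rplus_le_compat; auto.
Qed.

Lemma dcost_mono md Q1 Q2 : state_ge md Q2 Q1 -> dcost md Q1 <= dcost md Q2.
Proof.
  intro H. unfold dcost. apply sumR_mono. intros n Hn. apply in_seq in Hn.
  apply sumR_mono. intros m Hm.
  destruct (inM md n m) eqn:E; [|lra].
  apply le_INR. apply H. split; [lia|auto].
Qed.

Lemma minU_mono md f g : (forall u, f u <= g u) -> minU md f <= minU md g.
Proof.
  intro H. unfold minU. induction (actions md); simpl; auto.
  unfold Rmin at 1 3.
  destruct (Rle_dec (f a) _); destruct (Rle_dec (g a) _);
  specialize (H a); lra.
Qed.

Definition monoV md (V : state -> R) :=
  forall Q1 Q2, state_ge md Q2 Q1 -> V Q1 <= V Q2.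

Lemma RVI_mono md (Hwf : model_wf md) Qref : forall l, monoV md (RVI md Qref l).
Proof.
  induction l as [|l IH]; intros Q1 Q2 H; simpl; [lra|].
  set (V := RVI md Qref l) in *.
  set (B := Rmax (Rabs (V (fun _ _ => 0%nat))) (Rabs (V (cap md)))).
  assert (HB : forall Q, inQ md Q -> Rabs (V Q) <= B).
  { intros Q HQ.
    assert (h1 : V (fun _ _ => 0%nat) <= V Q) by (apply IH; intros n m _; lia).
    assert (h2 : V Q <= V (cap md)) by (apply IH; intros n m Hd; apply (HQ n m); auto).
    unfold B. unfold Rmax. destruct (Rle_dec _ _);
    unfold Rabs in *; repeat destruct Rcase_abs; lra. }
  apply Rplus_le_compat_r. apply minU_mono. intro u. unfold Jfun.
  apply Rplus_le_compat.
  - unfold gcost. apply Rplus_le_compat_r. apply dcost_mono; auto.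
  - unfold Exp. apply (Eidx_mono md Hwf _ (Good_arr md) _ _ B).
    + intro a; apply HB, next_inQ.
    + intro a; apply HB, next_inQ.
    + intro a. apply IH. apply next_mono; auto.
Qed.

Theorem lemma2 (md : Model) (Hwf : model_wf md)
  (Qref : state) (HQref : inQ md Qref)
  (V : state -> R)
  (Hconv : forall Q, inQ md Q -> Un_cv (fun l => RVI md Qref l Q) (V Q)) :
  forall Q1 Q2 : state, inQ md Q1 -> inQ md Q2 -> state_ge md Q2 Q1 ->
    V Q2 >= V Q1.
Proof.
  intros Q1 Q2 H1 H2 H. apply Rle_ge.
  eapply Rle_cv_lim; [|apply Hconv; auto|apply Hconv; auto].
  intro l. apply (RVI_mono md Hwf Qref l); auto.
Qed.
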